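(* Let $F$ be a field with $F=\mathbb Q$ or $F=\mathbb Z_p$ ($p$ prime), and let $A$ be a prime $F$-algebra generated as an $F$-algebra by two principally nilpotent elements $x,y$ such that $x+y$ is a minimal non-nilpotent element of $A$ and $xA+yA=\mathcal J(A)$ is the unique maximal right (and left) ideal of $A$. Then $A$ embeds (as a subring) into a countable prime von Neumann regular ring $R$ such that $J\cap A\neq 0$ for every non-zero ideal $J$ of $R$.
   Context: All rings are associative with unit; ''ideal'' means two-sided ideal. A ring $R$ is von Neumann regular (VNR) if for every $x\in R$ there is $y\in R$ with $x=xyx$. An element $a$ of a ring $A$ is principally nilpotent if every element of the right ideal $aA$ is nilpotent. An element $b$ of $A$ is minimal non-nilpotent if $b$ is not nilpotent and for every non-zero ideal $J$ of $A$ there is $n$ with $b^n\in J$. $\mathcal J(A)$ is the Jacobson radical. *)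

(* Defs.v *)
From HB Require Import structures.
From mathcomp Require Import all_boot all_order all_algebra.
Set Implicit Arguments. Unset Strict Implicit. Unset Printing Implicit Defensive.
Import Order.TTheory GRing.Theory Num.Theory.
Local Open Scope ring_scope.

(* Subsets of a ring are represented as Prop-valued predicates R -> Prop. *)

Section Defs.
Variable R : nzRingType.

Definition is_addsubgroup (I : R -> Prop) : Prop :=
  I 0 /\ (forall a b, I a -> I b -> I (a - b)).

Definition is_right_ideal (I : R -> Prop) : Prop :=
  is_addsubgroup I /\ (forall a r, I a -> I (a * r)).

Definition is_left_ideal (I : R -> Prop) : Prop :=
  is_addsubgroup I /\ (forall a r, I a -> I (r * a)).

Definition is_ideal (I : R -> Prop) : Prop :=
  is_right_ideal I /\ is_left_ideal I.

Definition nonzero_set (I : R -> Prop) : Prop := exists a, I a /\ a != 0.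

Definition proper_set (I : R -> Prop) : Prop := exists a, ~ I a.

Definition same_set (I J : R -> Prop) : Prop := forall a, I a <-> J a.

Definition subset_of (I J : R -> Prop) : Prop := forall a, I a -> J a.

Definition is_max_right_ideal (M : R -> Prop) : Prop :=
  [/\ is_right_ideal M, proper_set M &
      forall N, is_right_ideal N -> subset_of M N -> proper_set N ->
        same_set N M].

Definition is_max_left_ideal (M : R -> Prop) : Prop :=
  [/\ is_left_ideal M, proper_set M &
      forall N, is_left_ideal N -> subset_of M N -> proper_set N ->
        same_set N M].

Definition jacobson (a : R) : Prop :=
  forall M, is_max_right_ideal M -> M a.

Definition prime_ring : Prop :=
  forall I J : R -> Prop, is_ideal I -> is_ideal J ->
    (forall i j, I i -> J j -> i * j = 0) ->
    (forall i, I i -> i = 0) \/ (forall j, J j -> j = 0).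

Definition vnr : Prop := forall x : R, exists y, x = x * y * x.

Definition nilpotent (a : R) : Prop := exists n, a ^+ n = 0.

Definition principally_nilpotent (a : R) : Prop :=
  forall r : R, nilpotent (a * r).

Definition minimal_non_nilpotent (b : R) : Prop :=
  ~ nilpotent b /\
  forall J, is_ideal J -> nonzero_set J -> exists n, J (b ^+ n).

Definition countable_type (T : Type) : Prop :=
  exists g : T -> nat, injective g.

Definition sum_right_ideal (x y : R) (a : R) : Prop :=
  exists r s, a = x * r + y * s.
End Defs.

Definition Q_or_Zp (F : fieldType) : Prop :=
  (exists f : {rmorphism rat -> F}, bijective f) \/
  (exists p : nat, prime p /\ exists f : {rmorphism 'F_p -> F}, bijective f).

Definition generated_by2 (F : fieldType) (A : algType F) (x y : A) : Prop :=
  forall S : {pred A}, subalg_closed S -> x \in S -> y \in S ->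
    forall a : A, a \in S.

(* Main.v *)
Require Import Defs.
From HB Require Import structures.
From mathcomp Require Import all_boot all_order all_algebra.
From mathcomp Require Import boolp classical_sets.
Set Implicit Arguments. Unset Strict Implicit. Unset Printing Implicit Defensive.
Import GRing.Theory.
Local Open Scope ring_scope.

Section QDef.
Variables (F : fieldType) (A : algType F).

Record Q := MkQ { qfn :> A -> A ;
  qlin : forall (c : F) (u v : A), qfn (c *: u + v) = c *: qfn u + qfn v }.

HB.instance Definition _ := gen_eqMixin Q.
HB.instance Definition _ := gen_choiceMixin Q.

Lemma qext (p q : Q) : (forall a, p a = q a) -> p = q.
Proof.
case: p q => [p hp] [q hq] /= e.
have ep : p = q by apply: funext.
subst q; congr MkQ; exact: Prop_irrelevance.
Qed.

Lemma qD (p : Q) u v : p (u + v) = p u + p v.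
Proof. by have := qlin p 1 u v; rewrite !scale1r. Qed.
Lemma q0 (p : Q) : p 0 = 0.
Proof. by apply: (addrI (p 0)); rewrite -qD !addr0. Qed.
Lemma qZ (p : Q) c u : p (c *: u) = c *: p u.
Proof. by rewrite -[c *: u]addr0 qlin q0 addr0. Qed.
Lemma qN (p : Q) u : p (- u) = - p u.
Proof. by rewrite -scaleN1r qZ scaleN1r. Qed.

Definition qzero : Q := @MkQ (fun _ => 0) (fun c u v => ltac:(simpl; by rewrite scaler0 addr0)).
Definition qone : Q := @MkQ id (fun c u v => erefl).
Definition qadd (p q : Q) : Q := @MkQ (fun a => p a + q a)
  (fun c u v => ltac:(simpl; by rewrite !qlin scalerDr addrACA)).
Definition qopp (p : Q) : Q := @MkQ (fun a => - p a)
  (fun c u v => ltac:(simpl; by rewrite qlin opprD scalerN)).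
Definition qmul (p q : Q) : Q := @MkQ (fun a => p (q a))
  (fun c u v => ltac:(simpl; by rewrite !qlin)).

Lemma qaddA : associative qadd. Proof. by move=> *; apply: qext => a /=; rewrite addrA. Qed.
Lemma qaddC : commutative qadd. Proof. by move=> *; apply: qext => a /=; rewrite addrC. Qed.
Lemma qadd0 : left_id qzero qadd. Proof. by move=> *; apply: qext => a /=; rewrite add0r. Qed.
Lemma qaddN : left_inverse qzero qopp qadd. Proof. by move=> *; apply: qext => a /=; rewrite addNr. Qed.

HB.instance Definition _ := GRing.isZmodule.Build Q qaddA qaddC qadd0 qaddN.

Lemma qmulA : associative qmul. Proof. by move=> *; apply: qext. Qed.
Lemma qmul1 : left_id qone qmul. Proof. by move=> *; apply: qext. Qed.
Lemma qmul1r : right_id qone qmul. Proof. by move=> *; apply: qext. Qed.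
Lemma qmulDl : left_distributive qmul +%R. Proof. by move=> *; apply: qext. Qed.
Lemma qmulDr : right_distributive qmul +%R.
Proof. by move=> *; apply: qext => a /=; rewrite qD. Qed.
Lemma qone_neq0 : qone != 0.
Proof.
apply/eqP => /(congr1 (fun p : Q => qfn p 1)) /= /eqP; rewrite oner_eq0; done.
Qed.

HB.instance Definition _ := GRing.Zmodule_isNzRing.Build Q qmulA qmul1 qmul1r qmulDl qmulDr qone_neq0.

Lemma qmulE (p q : Q) a : (p * q) a = p (q a). Proof. by []. Qed.
Lemma qaddE (p q : Q) a : (p + q) a = p a + q a. Proof. by []. Qed.
Lemma qoppE (p : Q) a : (- p) a = - p a. Proof. by []. Qed.
Lemma qsubE (p q : Q) a : (p - q) a = p a - q a. Proof. by []. Qed.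
Lemma q0E a : (0 : Q) a = 0. Proof. by []. Qed.
Lemma q1E a : (1 : Q) a = a. Proof. by []. Qed.

Definition Lm (a : A) : Q := @MkQ (fun u => a * u)
  (fun c u v => ltac:(simpl; by rewrite mulrDr scalerAr)).

Lemma Lm_inj : injective Lm.
Proof. by move=> a b /(congr1 (fun p : Q => qfn p 1)) /=; rewrite !mulr1. Qed.
Lemma LmD a b : Lm (a + b) = Lm a + Lm b.
Proof. by apply: qext => u /=; rewrite mulrDl. Qed.
Lemma LmN a : Lm (- a) = - Lm a.
Proof. by apply: qext => u /=; rewrite mulNr. Qed.
Lemma LmM a b : Lm (a * b) = Lm a * Lm b.
Proof. by apply: qext => u /=; rewrite mulrA. Qed.
Lemma Lm1 : Lm 1 = 1.
Proof. by apply: qext => u /=; rewrite mul1r. Qed.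
Lemma Lm0 : Lm 0 = 0.
Proof. by apply: qext => u /=; rewrite mul0r. Qed.
Lemma LmZ c a : Lm (c *: a) = Lm (c%:A) * Lm a.
Proof. by rewrite -LmM mulr_algl. Qed.

End QDef.
Lemma zorn_sets (T : Type) (Pr : (T -> Prop) -> Prop) :
  (forall Fm : (T -> Prop) -> Prop, (forall X, Fm X -> Pr X) ->
     (forall X Y, Fm X -> Fm Y -> (forall t, X t -> Y t) \/ (forall t, Y t -> X t)) ->
     Pr (fun t => exists2 X, Fm X & X t)) ->
  exists Mx, Pr Mx /\ forall B, (forall t, Mx t -> B t) -> (exists t, B t /\ ~ Mx t) -> ~ Pr B.
Proof.
move=> H.
have [Mx [PM maxM]] := @Zorn_bigcup T Pr (fun Fm FP Ftot => H Fm FP Ftot).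
exists Mx; split => // B MB [t [Bt nMt]]; apply: maxM; split => // BM.
exact/nMt/BM.
Qed.

Lemma grp1 (V : zmodType) (X u Y Z : V) : - X + u + Y + (Z + X - Y) = u + Z.
Proof.
rewrite [- X + u]addrC -!addrA; congr (_ + _).
by rewrite [Z + _]addrCA [Y + _]addrCA addKr addrCA subrr addr0.
Qed.

Section VNR.
Variables (F : fieldType) (A : algType F) (f : Q A).

Definition Wf (w : A) := exists b, f b = w.

Definition Pg (G : A * A -> Prop) :=
  [/\ (forall u v v', G (u,v) -> G (u,v') -> v = v'),
      (forall (c : F) u1 v1 u2 v2, G (u1,v1) -> G (u2,v2) -> G (c *: u1 + u2, c *: v1 + v2)) &
      (forall u v, G (u,v) -> Wf u -> f v = u)].

Lemma Pg_chain : forall Fm : (A * A -> Prop) -> Prop, (forall X, Fm X -> Pg X) ->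
     (forall X Y, Fm X -> Fm Y -> (forall t, X t -> Y t) \/ (forall t, Y t -> X t)) ->
     Pg (fun t => exists2 X, Fm X & X t).
Proof.
move=> Fm FP Ftot; split.
- move=> u v v' [X FX Xv] [Y FY Yv].
  have [XY|YX] := Ftot X Y FX FY.
    by have [h _ _] := FP Y FY; apply: (h u); [apply: XY|].
  by have [h _ _] := FP X FX; apply: (h u); [|apply: YX].
- move=> c u1 v1 u2 v2 [X FX Xv] [Y FY Yv].
  have [XY|YX] := Ftot X Y FX FY.
    by exists Y => //; have [_ h _] := FP Y FY; apply: h => //; apply: XY.
  by exists X => //; have [_ h _] := FP X FX; apply: h => //; apply: YX.
- by move=> u v [X FX Xv]; have [_ _ h] := FP X FX; apply: h.
Qed.

Lemma Wf_lin (c : F) u w : Wf u -> Wf w -> Wf (c *: u + w).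
Proof. by move=> [b <-] [b' <-]; exists (c *: b + b'); rewrite qlin. Qed.

Lemma Pg_neg G u v : Pg G -> G (u,v) -> G (0,0).
Proof.
move=> [_ h _] Guv; have := h (-1) u v u v Guv Guv.
by rewrite !scaleN1r !addNr.
Qed.

Lemma Pg_total G : Pg G -> (forall B, (forall t, G t -> B t) -> (exists t, B t /\ ~ G t) -> ~ Pg B) ->
  forall a, exists v, G (a, v).
Proof.
move=> PG maxG.
have G00 : G (0,0).
  case: (pselect (exists t, G t)) => [[[u v] Guv]|nG]; first exact: Pg_neg Guv.
  exfalso; apply: (maxG (fun t => t = (0,0))).
  - by move=> t Gt; case: nG; exists t.
  - by exists (0,0); split => // G0; apply: nG; exists (0,0).
  split.
  + by move=> u v v' [_ ->] [_ ->].
  + by move=> c u1 v1 u2 v2 [-> ->] [-> ->]; rewrite scaler0 addr0.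
  + by move=> u v [-> ->] _; rewrite q0.
have [PGf PGl PGs] := PG.
move=> a; apply: contrapT => na.
have nGa : forall v, ~ G (a, v) by move=> v Gv; apply: na; exists v.
pose Ex := exists u0 v0, G (u0, v0) /\ Wf (a + u0).
have [z' Hz'] : exists z' : A, (exists u0 v0 z, [/\ G (u0, v0), f z = a + u0 & z' = z - v0]) \/ (~ Ex /\ z' = 0).
  case: (pselect Ex) => [[u0 [v0 [Gu0 [z fz]]]]|nEx].
    by exists (z - v0); left; exists u0, v0, z.
  by exists 0; right.
pose B := fun t : A * A => exists u v (mu : F), G (u, v) /\ t = (u + mu *: a, v + mu *: z').
have GB : forall t, G t -> B t.
  by move=> [u v] Guv; exists u, v, 0; rewrite !scale0r !addr0.
have BnG : exists t, B t /\ ~ G t.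
  exists (a, z'); split; last exact: nGa.
  by exists 0, 0, 1; rewrite !scale1r !add0r.
apply: (maxG B GB BnG); split.
- move=> u w w' [u1 [v1 [m1 [G1 [-> ->]]]]] [u2 [v2 [m2 [G2 [e ->]]]]].
  case: (eqVneq m1 m2) => [em|nm].
    subst m2; have eu : u1 = u2 by move/addIr: e.
    by subst u2; rewrite (PGf _ _ _ G1 G2).
  exfalso; apply: (nGa ((m1 - m2)^-1 *: (v2 - v1))).
  have Gd : G (u2 - u1, v2 - v1).
    by have := PGl (-1) u1 v1 u2 v2 G1 G2; rewrite !scaleN1r ![- _ + _]addrC.
  have := PGl ((m1 - m2)^-1) _ _ _ _ Gd G00; rewrite !addr0.
  suff -> : (m1 - m2)^-1 *: (u2 - u1) = a by [].
  have e2 : u2 - u1 = (m1 - m2) *: a.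
    have e3 : u2 = u1 + (m1 *: a - m2 *: a) by rewrite addrA e addrK.
    by rewrite e3 [_ - u1]addrC addKr scalerBl.
  by rewrite e2 scalerA mulVf ?scale1r // subr_eq0.
- move=> c t1 w1 t2 w2 [u1 [v1 [m1 [G1 [-> ->]]]]] [u2 [v2 [m2 [G2 [-> ->]]]]].
  exists (c *: u1 + u2), (c *: v1 + v2), (c * m1 + m2); split; first exact: PGl.
  by congr pair; rewrite !scalerDr !scalerDl !scalerA addrACA.
- move=> t w [u [v [m [Guv [-> ->]]]]] Wt.
  case: Hz' => [[u0 [v0 [z [Gu0 fz ->]]]]|[nEx ->]].
    have Gd : G ((- m) *: u0 + u, (- m) *: v0 + v) by apply: PGl.
    have Wd : Wf ((- m) *: u0 + u).
      have -> : (- m) *: u0 + u = (u + m *: a) + (- m) *: (a + u0).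
        by rewrite scalerDr scaleNr scaleNr addrA addrK addrC.
      by rewrite addrC; apply: Wf_lin => //; exists z.
    have h := PGs _ _ Gd Wd.
    rewrite qlin scaleNr in h.
    have h' : f v = (- m) *: u0 + u + m *: f v0 by rewrite -h addrAC addNr add0r.
    rewrite qD qZ qD qN fz h' scaleNr scalerDr scalerN scalerDr.
    exact: grp1.
  rewrite scaler0 addr0.
  case: (eqVneq m 0) => [em|nm].
    by rewrite em scale0r addr0 in Wt *; exact: (PGs _ _ Guv Wt).
  exfalso; apply: nEx; exists (m^-1 *: u), (m^-1 *: v); split.
    by have := PGl (m^-1) _ _ _ _ Guv G00; rewrite !addr0.
  have -> : a + m^-1 *: u = m^-1 *: (u + m *: a) + 0.
    by rewrite addr0 scalerDr scalerA mulVf // ?scale1r addrC.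
  by apply: Wf_lin => //; exists 0; rewrite q0.
Qed.

Lemma Q_vnr : exists g : Q A, f * g * f = f.
Proof.
have [G [PG maxG]] := zorn_sets Pg_chain.
have tot := Pg_total PG maxG.
have [PGf PGl PGs] := PG.
pose g := fun a => projT1 (cid (tot a)).
have Gg : forall a, G (a, g a) by move=> a; rewrite /g; case: cid.
have glin : forall (c : F) u v, g (c *: u + v) = c *: g u + g v.
  by move=> c u v; apply: (PGf _ _ _ (Gg _)); apply: PGl.
exists (MkQ glin); apply: qext => a /=.
by apply: PGs; [exact: Gg | exists a].
Qed.

End VNR.

Section Terms.
Variables (F : fieldType) (A : algType F) (x y : A).
Variables (gF : F -> nat) (gF_inj : injective gF).

Inductive tm := Tx | Ty | Tc of F | T0 | T1 | Tadd of tm & tm | Topp of tm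
  | Tmul of tm & tm | Tqi of tm.

HB.instance Definition _ := gen_eqMixin tm.
HB.instance Definition _ := gen_choiceMixin tm.

Definition qi (p : Q A) : Q A := projT1 (cid (Q_vnr p)).
Lemma qiP p : p * qi p * p = p.
Proof. by rewrite /qi; case: cid. Qed.

Fixpoint interp (t : tm) : Q A :=
  match t with
  | Tx => Lm x | Ty => Lm y | Tc c => Lm (c%:A) | T0 => 0 | T1 => 1
  | Tadd a b => interp a + interp b | Topp a => - interp a
  | Tmul a b => interp a * interp b | Tqi a => qi (interp a)
  end.

Fixpoint enc (t : tm) : GenTree.tree nat :=
  match t with
  | Tx => GenTree.Node 0 [::] | Ty => GenTree.Node 1 [::]
  | Tc c => GenTree.Leaf (gF c)
  | T0 => GenTree.Node 2 [::] | T1 => GenTree.Node 3 [::]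
  | Tadd a b => GenTree.Node 4 [:: enc a; enc b]
  | Topp a => GenTree.Node 5 [:: enc a]
  | Tmul a b => GenTree.Node 6 [:: enc a; enc b]
  | Tqi a => GenTree.Node 7 [:: enc a]
  end.

Lemma enc_inj : injective enc.
Proof.
elim=> [||c||| a IHa b IHb | a IHa | a IHa b IHb | a IHa] [||c'||| a' b' | a' | a' b' | a'] //=;
  try by case.
- by case=> /gF_inj ->.
- by case=> /IHa -> /IHb ->.
- by case=> /IHa ->.
- by case=> /IHa -> /IHb ->.
- by case=> /IHa ->.
Qed.

Definition R0 (q : Q A) := exists t, interp t = q.

Hypothesis gen : generated_by2 x y.

Lemma term_exists a : exists t, interp t = Lm a.
Proof.
pose S : {pred A} := [pred u | `[< exists t, interp t = Lm u >]].
have SP u : u \in S <-> exists t, interp t = Lm u.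
  by rewrite unfold_in; split => [/asboolP|/asboolP].
have cl : GRing.subalg_closed S.
  split.
  - by apply/SP; exists T1; rewrite Lm1.
  - move=> c u v /SP [tu eu] /SP [tv ev]; apply/SP.
    by exists (Tadd (Tmul (Tc c) tu) tv); rewrite /= eu ev LmD [Lm (c *: u)]LmZ.
  - move=> u v /SP [tu eu] /SP [tv ev]; apply/SP.
    by exists (Tmul tu tv); rewrite /= eu ev LmM.
apply/SP; apply: (gen cl); apply/SP.
- by exists Tx.
- by exists Ty.
Qed.

Definition Good (X : Q A -> Prop) :=
  [/\ forall q, X q -> R0 q, X 0,
      forall p q, X p -> X q -> X (p - q),
      forall p r, X p -> R0 r -> X (r * p) /\ X (p * r) &
      forall a, X (Lm a) -> a = 0].

Definition PrG (X : Q A -> Prop) := (forall q, ~ X q) \/ Good X.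

Lemma PrG_chain : forall Fm : (Q A -> Prop) -> Prop, (forall X, Fm X -> PrG X) ->
     (forall X Y, Fm X -> Fm Y -> (forall t, X t -> Y t) \/ (forall t, Y t -> X t)) ->
     PrG (fun t => exists2 X, Fm X & X t).
Proof.
move=> Fm FP Ftot.
case: (pselect (exists X q, Fm X /\ X q)) => [[X0 [q0 [FX0 Xq0]]]|ne]; last first.
  by left=> q [X FX Xq]; apply: ne; exists X, q.
have GX : forall X q, Fm X -> X q -> Good X.
  by move=> X q FX Xq; case: (FP X FX) => // h; case: (h q).
have G0 := GX _ _ FX0 Xq0.
right; split.
- by move=> q [X FX Xq]; have [h _ _ _ _] := GX _ _ FX Xq; apply: h.
- by exists X0 => //; case: G0.
- move=> p q [X FX Xp] [Y FY Yq].
  have [XY|YX] := Ftot X Y FX FY.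
    by exists Y => //; have [_ _ h _ _] := GX _ _ FY Yq; apply: h => //; apply: XY.
  by exists X => //; have [_ _ h _ _] := GX _ _ FX Xp; apply: h => //; apply: YX.
- move=> p r [X FX Xp] Rr; have [_ _ _ h _] := GX _ _ FX Xp.
  by have [h1 h2] := h p r Xp Rr; split; exists X.
- by move=> a [X FX Xa]; have [_ _ _ _ h] := GX _ _ FX Xa; apply: h.
Qed.

Lemma exists_M : exists M, Good M /\
  forall B, (forall t, M t -> B t) -> (exists t, B t /\ ~ M t) -> ~ PrG B.
Proof.
have [M [PM maxM]] := zorn_sets PrG_chain.
exists M; split => //.
case: PM => // eM; exfalso.
apply: (maxM (fun q => q = 0)).
- by move=> t /eM.
- by exists 0; split => //; apply: eM.
right; split.
- by move=> q ->; exists T0.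
- by [].
- by move=> p q -> ->; rewrite subr0.
- by move=> p r -> _; rewrite mulr0 mul0r.
- by move=> a; rewrite -(Lm0 A); move/Lm_inj.
Qed.

End Terms.
Arguments Tx {F}. Arguments Ty {F}. Arguments T0 {F}. Arguments T1 {F}.

Section Quot.
Local Open Scope quotient_scope.
Variables (F : fieldType) (A : algType F) (x y : A).
Variable M : Q A -> Prop.
Hypothesis HM : Good x y M.
Hypothesis maxM : forall B, (forall t, M t -> B t) -> (exists t, B t /\ ~ M t) -> ~ PrG x y B.

Local Notation interp := (interp x y).
Local Notation tm := (tm F).

Lemma M_R0 q : M q -> R0 x y q. Proof. by case: HM => h _ _ _ _; apply: h. Qed.
Lemma M_0 : M 0. Proof. by case: HM. Qed.
Lemma M_sub p q : M p -> M q -> M (p - q). Proof. by case: HM => _ _ h _ _; apply: h. Qed.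
Lemma M_mull p r : M p -> R0 x y r -> M (r * p).
Proof. by case: HM => _ _ _ h _ => /h h' /h' []. Qed.
Lemma M_mulr p r : M p -> R0 x y r -> M (p * r).
Proof. by case: HM => _ _ _ h _ => /h h' /h' []. Qed.
Lemma M_Lm a : M (Lm a) -> a = 0. Proof. by case: HM => _ _ _ _ h; apply: h. Qed.
Lemma M_opp p : M p -> M (- p). Proof. by move=> h; rewrite -sub0r; apply: M_sub => //; apply: M_0. Qed.
Lemma M_add p q : M p -> M q -> M (p + q).
Proof. by move=> hp hq; rewrite -[q]opprK; apply: M_sub => //; apply: M_opp. Qed.

Definition e (t s : tm) : bool := `[< M (interp t - interp s) >].

Lemma eP t s : reflect (M (interp t - interp s)) (e t s).
Proof. exact: asboolP. Qed.

Lemma e_is_equiv : equiv_class_of e.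
Proof.
split.
- by move=> t; apply/eP; rewrite subrr; apply: M_0.
- move=> t s; apply/idP/idP => /eP h; apply/eP; rewrite -opprB; exact: M_opp.
- move=> s t u /eP h1 /eP h2; apply/eP.
  have -> : interp t - interp u = (interp t - interp s) + (interp s - interp u).
    by rewrite addrA addrNK.
  by apply: M_add => //; rewrite -opprB; apply: M_opp.
Qed.

Canonical e_equiv := EquivRelPack e_is_equiv.
Canonical e_encModRel := defaultEncModRel e.

Definition RR := {eq_quot e}.
HB.instance Definition _ : EqQuotient tm e RR := EqQuotient.on RR.
HB.instance Definition _ := Choice.on RR.

Local Notation pi := (\pi_RR).

Lemma piP t s : pi t = pi s <-> M (interp t - interp s).
Proof. by split => [/eqmodP/eP|/eP/eqmodP]. Qed.

Lemma piI t s : interp t = interp s -> pi t = pi s.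
Proof. by move=> h; apply/piP; rewrite h subrr; apply: M_0. Qed.

Lemma pi_repr t : M (interp (repr (pi t)) - interp t).
Proof. by apply/piP; rewrite reprK. Qed.

Lemma R0_interp t : R0 x y (interp t). Proof. by exists t. Qed.

Definition rzero : RR := pi T0.
Definition rone : RR := pi T1.
Definition radd : RR -> RR -> RR := locked (fun a b => pi (Tadd (repr a) (repr b))).
Definition ropp : RR -> RR := locked (fun a => pi (Topp (repr a))).
Definition rmul : RR -> RR -> RR := locked (fun a b => pi (Tmul (repr a) (repr b))).

Lemma pi_add t s : pi (Tadd t s) = radd (pi t) (pi s).
Proof.
rewrite /radd; unlock.
apply/piP => /=; set t' := repr (pi t); set s' := repr (pi s).
have -> : interp t + interp s - (interp t' + interp s') =
          (interp t - interp t') + (interp s - interp s').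
  by rewrite opprD addrACA.
by apply: M_add; rewrite -opprB; apply: M_opp; apply: pi_repr.
Qed.

Lemma pi_opp t : pi (Topp t) = ropp (pi t).
Proof.
rewrite /ropp; unlock.
by apply/piP => /=; rewrite opprK addrC; apply: pi_repr.
Qed.

Lemma pi_mul t s : pi (Tmul t s) = rmul (pi t) (pi s).
Proof.
rewrite /rmul; unlock.
apply/piP => /=; set t' := repr (pi t); set s' := repr (pi s).
have -> : interp t * interp s - interp t' * interp s' =
          (interp t - interp t') * interp s + interp t' * (interp s - interp s').
  by rewrite mulrBl mulrBr addrA addrNK.
apply: M_add.
  by apply: M_mulr; [rewrite -opprB; apply/M_opp/pi_repr | apply: R0_interp].
by apply: M_mull; [rewrite -opprB; apply/M_opp/pi_repr | apply: R0_interp].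
Qed.

Lemma piS (a : RR) : exists t, a = pi t.
Proof. by exists (repr a); rewrite reprK. Qed.

Lemma raddA : associative radd.
Proof.
move=> a b c; case: (piS a) => ta ->; case: (piS b) => tb ->; case: (piS c) => tc ->.
transitivity (pi (Tadd ta (Tadd tb tc))); first by rewrite !pi_add.
transitivity (pi (Tadd (Tadd ta tb) tc)); last by rewrite !pi_add.
by apply: piI => /=; rewrite addrA.
Qed.
Lemma raddC : commutative radd.
Proof.
move=> a b; case: (piS a) => ta ->; case: (piS b) => tb ->.
transitivity (pi (Tadd ta tb)); first by rewrite !pi_add.
transitivity (pi (Tadd tb ta)); last by rewrite !pi_add.
by apply: piI => /=; rewrite addrC.
Qed.
Lemma radd0 : left_id rzero radd.
Proof.
move=> a; case: (piS a) => ta ->.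
transitivity (pi (Tadd T0 ta)); first by rewrite !pi_add.
by apply: piI => /=; rewrite add0r.
Qed.
Lemma raddN : left_inverse rzero ropp radd.
Proof.
move=> a; case: (piS a) => ta ->.
transitivity (pi (Tadd (Topp ta) ta)); first by rewrite !pi_add pi_opp.
by apply: piI => /=; rewrite addNr.
Qed.

HB.instance Definition _ := GRing.isZmodule.Build RR raddA raddC radd0 raddN.

Lemma rmulA : associative rmul.
Proof.
move=> a b c; case: (piS a) => ta ->; case: (piS b) => tb ->; case: (piS c) => tc ->.
transitivity (pi (Tmul ta (Tmul tb tc))); first by rewrite !pi_mul.
transitivity (pi (Tmul (Tmul ta tb) tc)); last by rewrite !pi_mul.
by apply: piI => /=; rewrite mulrA.
Qed.
Lemma rmul1 : left_id rone rmul.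
Proof.
move=> a; case: (piS a) => ta ->.
transitivity (pi (Tmul T1 ta)); first by rewrite !pi_mul.
by apply: piI => /=; rewrite mul1r.
Qed.
Lemma rmulr1 : right_id rone rmul.
Proof.
move=> a; case: (piS a) => ta ->.
transitivity (pi (Tmul ta T1)); first by rewrite !pi_mul.
by apply: piI => /=; rewrite mulr1.
Qed.
Lemma rmulDl : left_distributive rmul +%R.
Proof.
move=> a b c; case: (piS a) => ta ->; case: (piS b) => tb ->; case: (piS c) => tc ->.
transitivity (pi (Tmul (Tadd ta tb) tc)); first by rewrite pi_mul pi_add.
transitivity (pi (Tadd (Tmul ta tc) (Tmul tb tc))); last by rewrite pi_add !pi_mul.
by apply: piI => /=; rewrite mulrDl.
Qed.
Lemma rmulDr : right_distributive rmul +%R.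
Proof.
move=> a b c; case: (piS a) => ta ->; case: (piS b) => tb ->; case: (piS c) => tc ->.
transitivity (pi (Tmul ta (Tadd tb tc))); first by rewrite pi_mul pi_add.
transitivity (pi (Tadd (Tmul ta tb) (Tmul ta tc))); last by rewrite pi_add !pi_mul.
by apply: piI => /=; rewrite mulrDr.
Qed.
Lemma rone_neq0 : rone != 0.
Proof.
apply/eqP => /piP /=; rewrite subr0 -(Lm1 A) => /M_Lm /eqP.
by rewrite oner_eq0.
Qed.

HB.instance Definition _ := GRing.Zmodule_isNzRing.Build RR rmulA rmul1 rmulr1 rmulDl rmulDr rone_neq0.

Lemma piD t s : pi (Tadd t s) = pi t + pi s. Proof. exact: pi_add. Qed.
Lemma piN t : pi (Topp t) = - pi t. Proof. exact: pi_opp. Qed.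
Lemma piMul t s : pi (Tmul t s) = pi t * pi s. Proof. exact: pi_mul. Qed.
Lemma pi0 : pi T0 = 0. Proof. by []. Qed.

End Quot.

Section Final.
Local Open Scope quotient_scope.
Variables (F : fieldType) (A : algType F) (x y : A).
Variable M : Q A -> Prop.
Hypothesis HM : Good x y M.
Hypothesis maxM : forall B, (forall t, M t -> B t) -> (exists t, B t /\ ~ M t) -> ~ PrG x y B.
Hypothesis gen : generated_by2 x y.
Variables (gF : F -> nat) (gF_inj : injective gF).
Hypothesis Aprime : prime_ring A.

Local Notation interp := (interp x y).
Local Notation RR := (RR HM).
Local Notation pi := (\pi_RR).

Definition tof (a : A) : tm F := projT1 (cid (term_exists gen a)).
Lemma tofP a : interp (tof a) = Lm a.
Proof. by rewrite /tof; case: cid. Qed.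

Definition fa (a : A) : RR := pi (tof a).

Lemma fa_zmod : zmod_morphism fa.
Proof.
move=> a b; rewrite /fa -piN -piD; apply: piI => /=.
by rewrite !tofP LmD LmN.
Qed.

Lemma fa_monoid : monoid_morphism fa.
Proof.
split.
  by rewrite /fa; apply: piI => /=; rewrite tofP Lm1.
by move=> a b; rewrite /fa -piMul; apply: piI => /=; rewrite !tofP LmM.
Qed.

HB.instance Definition _ := GRing.isZmodMorphism.Build A RR fa fa_zmod.
HB.instance Definition _ := GRing.isMonoidMorphism.Build A RR fa fa_monoid.

Lemma fa_inj : injective fa.
Proof.
move=> a b /piP; rewrite !tofP -LmN -LmD => /(M_Lm HM) /eqP.
by rewrite subr_eq0 => /eqP.
Qed.

Lemma RR_countable : countable_type RR.
Proof.
exists (fun r => pickle (enc gF (repr r))).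
move=> r s /(pcan_inj pickleK_inv) /(enc_inj gF_inj) h.
by rewrite -[r]reprK -[s]reprK h.
Qed.

Lemma RR_vnr : vnr RR.
Proof.
move=> r; case: (piS r) => t ->.
exists (pi (Tqi t)); rewrite -!piMul; apply: piI => /=.
by rewrite qiP.
Qed.

Lemma RR_meet (J : RR -> Prop) : is_ideal J -> nonzero_set J ->
  exists a : A, a != 0 /\ J (fa a).
Proof.
move=> [[[J0 Jsub] Jr] [_ Jl]] [r [Jr0 rn0]].
pose X := fun q => exists t, J (pi t) /\ interp t = q.
apply: contrapT => nex.
apply: (maxM (B := X)).
- move=> q Mq; case: (M_R0 HM Mq) => t et; exists t; split => //.
  suff -> : pi t = 0 by [].
  by rewrite -pi0; apply/piP => /=; rewrite et subr0.
- exists (interp (repr r)); split; first by exists (repr r); rewrite reprK.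
  move=> Mr; move/eqP: rn0; apply; rewrite -[r]reprK -pi0; apply/piP => /=.
  by rewrite subr0.
right; split.
- by move=> q [t [_ <-]]; exists t.
- by exists T0; rewrite pi0.
- move=> p q [t [Jt <-]] [s [Js <-]]; exists (Tadd t (Topp s)).
  by rewrite piD piN; split => //; apply: Jsub.
- move=> p q [t [Jt <-]] [u <-]; split.
    by exists (Tmul u t); rewrite piMul; split => //; apply: Jl.
  by exists (Tmul t u); rewrite piMul; split => //; apply: Jr.
- move=> a [t [Jt et]]; apply: contrapT => an0; apply: nex; exists a; split.
    exact/eqP.
  suff -> : fa a = pi t by [].
  by apply: piI; rewrite tofP.
Qed.

Lemma RR_prime : prime_ring RR.
Proof.
move=> I J HI HJ IJ.
case: (pselect (forall i, I i -> i = 0)) => [h|h]; [by left|right].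
move=> j Jj; apply: contrapT => jn0.
have [a [an0 Ia]] : exists a : A, a != 0 /\ I (fa a).
  apply: RR_meet => //; apply: contrapT => nI; apply: h => i Ii.
  by apply: contrapT => in0; apply: nI; exists i; split => //; apply/eqP.
have [b [bn0 Jb]] : exists b : A, b != 0 /\ J (fa b).
  by apply: RR_meet => //; exists j; split => //; apply/eqP.
have acb : forall c, a * c * b = 0.
  move=> c; apply: fa_inj; rewrite !rmorphM rmorph0.
  apply: IJ => //; case: HI => [[_ Ir] _]; exact: Ir.
pose J2 := fun v : A => forall c, a * c * v = 0.
pose I2 := fun u : A => forall c v, J2 v -> u * c * v = 0.
have HI2 : is_ideal I2.
  split; split.
  + split; first by move=> c v _; rewrite !mul0r.
    by move=> u1 u2 hh1 hh2 c v Jv; rewrite !mulrBl (hh1 c v Jv) (hh2 c v Jv) subrr.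
  + by move=> u r hh c v Jv; rewrite -(mulrA u r c) (hh _ _ Jv).
  + split; first by move=> c v _; rewrite !mul0r.
    by move=> u1 u2 hh1 hh2 c v Jv; rewrite !mulrBl (hh1 c v Jv) (hh2 c v Jv) subrr.
  + by move=> u r hh c v Jv; rewrite -(mulrA r u c) -(mulrA r) (hh _ _ Jv) mulr0.
have HJ2 : is_ideal J2.
  split; split.
  + by split; [move=> c; rewrite mulr0 | move=> u v hh1 hh2 c; rewrite mulrBr (hh1 c) (hh2 c) subrr].
  + by move=> v r hh c; rewrite mulrA (hh c) mul0r.
  + by split; [move=> c; rewrite mulr0 | move=> u v hh1 hh2 c; rewrite mulrBr (hh1 c) (hh2 c) subrr].
  + by move=> v r hh c; rewrite mulrA -(mulrA a) (hh (c * r)).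
have HIJ : forall u v, I2 u -> J2 v -> u * v = 0.
  by move=> u v Iu Jv; rewrite -(mulr1 u) (Iu 1 v Jv).
case: (Aprime HI2 HJ2 HIJ).
- by move=> /(_ a (fun c v Jv => Jv c)) /eqP; rewrite (negbTE an0).
- by move=> /(_ b acb) /eqP; rewrite (negbTE bn0).
Qed.

End Final.

Unset Implicit Arguments.
Set Strict Implicit.

Theorem mainTheorem9 (F : fieldType) (A : algType F) (x y : A) :
  Q_or_Zp F ->
  prime_ring A ->
  generated_by2 x y ->
  principally_nilpotent x ->
  principally_nilpotent y ->
  minimal_non_nilpotent (x + y) ->
  same_set (sum_right_ideal x y) (@jacobson A) ->
  is_max_right_ideal (sum_right_ideal x y) ->
  (forall M : A -> Prop, is_max_right_ideal M -> same_set M (sum_right_ideal x y)) ->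
  is_max_left_ideal (sum_right_ideal x y) ->
  (forall M : A -> Prop, is_max_left_ideal M -> same_set M (sum_right_ideal x y)) ->
  exists (R : nzRingType) (f : {rmorphism A -> R}),
    [/\ countable_type R, prime_ring R, vnr R, injective f &
        forall J : R -> Prop, is_ideal J -> nonzero_set J ->
          exists a : A, a != 0 /\ J (f a)].
Proof.
move=> hF Apr gen _ _ _ _ _ _ _ _.
have [gF gF_inj] : exists gF : F -> nat, injective gF.
  case: hF => [[f [g fg gf]]|[p [_ [f [g fg gf]]]]].
  - by exists (fun c => pickle (g c)) => c d /(pcan_inj pickleK_inv) /(can_inj gf).
  - by exists (fun c => pickle (g c)) => c d /(pcan_inj pickleK_inv) /(can_inj gf).
have [M [HM maxM]] := @exists_M F A x y.

exists (RR HM), (fa HM gen : {rmorphism A -> RR HM}); split.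
- exact: RR_countable gF_inj.
- exact: RR_prime maxM gen Apr.
- exact: RR_vnr.
- exact: fa_inj.
- exact: RR_meet maxM gen.
Qed.
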